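(* Let $f:(0,\infty)\to(0,\infty)$ satisfy $\lim_{\beta\to\infty}f(\beta)=\infty$, $\lim_{\beta\to\infty}\frac1\beta\log f(\beta)=0$ and $\lim_{\beta\to\infty}|\Lambda_\beta|/f(\beta)=\infty$, and let $\mathcal W=\{\sigma\in\mathcal S:|\mathrm{supp}[\sigma]|\le|\Lambda_\beta|/f(\beta)\}$. Then $$\lim_{\beta\to\infty}\frac1\beta\log\frac{\mu_\beta(\mathcal S\setminus\mathcal W)}{\mu_\beta(\mathcal S)}=-\infty.$$
   Context: Glauber setting. Fix $J>0$, $h>0$ with $0<h<2J$ and $2J/h\notin\mathbb N$; $\ell_c=\lceil 2J/h\rceil$. $\Lambda_\beta\subset\mathbb Z^2$: square box of odd side length centred at the origin with periodic boundary conditions, $|\Lambda_\beta|\to\infty$. State space $\mathcal X_\beta=\{-1,+1\}^{\Lambda_\beta}$, $\mathrm{supp}[\sigma]=\{x:\sigma(x)=+1\}$. Hamiltonian $H_\beta(\sigma)=-\frac J2\sum_{\{x,y\}}\sigma(x)\sigma(y)-\frac h2\sum_x\sigma(x)$ (unordered nearest-neighbour pairs); Gibbs measure $\mu_\beta=e^{-\beta H_\beta}/Z_\beta$. Bootstrap map $C_B(\sigma)$: replace each cluster of $(+1)$-spins by its circumscribed rectangle and iterate (merging rectangles at distance $<2$) until the $(+1)$-spins form rectangles pairwise at distance $\ge2$; subcritical: each such rectangle fits in an $(\ell_c-1)\times\ell_c$ rectangle. $\mathcal S=\{\sigma:C_B(\sigma)\text{ subcritical}\}$. *)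

(* Defs.v *)
From mathcomp Require Import all_boot.
From Stdlib Require Import Reals.
Set Implicit Arguments. Unset Strict Implicit. Unset Printing Implicit Defensive.

(* Odd side length of the box Lambda_beta, given its "half side" m. *)
Definition side (m : nat) : nat := (2 * m).+1.

(* Critical length l_c = ceil(2J/h); equals [up (2J/h)] since 2J/h is not an integer. *)
Definition lcrit (J h : R) : nat := Z.to_nat (up (2 * J / h)%R).

Section Glauber.
Variable L : nat.  (* side length of the torus Z_L x Z_L *)

Definition site := ('I_L * 'I_L)%type.
Definition config := {ffun site -> bool}.   (* true = +1, false = -1 *)

Definition supp (s : config) : {set site} := [set x | s x].

Definition cyc_nb (a c : nat) : bool := (c == a.+1 %% L) || (a == c.+1 %% L).

Definition nn (x y : site) : bool :=
  (x != y) &&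
  ((((x.1 : nat) == y.1) && cyc_nb x.2 y.2) || (((x.2 : nat) == y.2) && cyc_nb x.1 y.1)).

(* sites at (torus) Euclidean distance < 2, i.e. |dx| <= 1 and |dy| <= 1 *)
Definition close (x y : site) : bool :=
  (((x.1 : nat) == y.1) || cyc_nb x.1 y.1) && (((x.2 : nat) == y.2) || cyc_nb x.2 y.2).

Definition restr (r : rel site) (A : {set site}) : rel site :=
  fun x y => [&& x \in A, y \in A & r x y].

Definition cluster (r : rel site) (A : {set site}) (x : site) : {set site} :=
  [set y | connect (restr r A) x y].

(* circumscribed rectangle of a connected set K: product of its projections
   (each projection of a connected set is an arc of the cycle Z_L) *)
Definition hull (K : {set site}) : {set site} :=
  [set z : site | [exists u in K, u.1 == z.1] && [exists v in K, v.2 == z.2]].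

Definition step (r : rel site) (A : {set site}) : {set site} :=
  \bigcup_(x in A) hull (cluster r A x).

(* Bootstrap map: nn-clusters -> rectangles, then iteratively merge
   rectangles at distance < 2 (step is extensive, so L*L iterations reach
   the fixed point). *)
Definition CB (s : config) : {set site} :=
  iter (L * L) (step close) (step nn (supp s)).

Definition fits (lc a b : nat) : bool :=
  ((a <= lc.-1) && (b <= lc)) || ((a <= lc) && (b <= lc.-1)).

Definition subcritical (lc : nat) (s : config) : bool :=
  [forall x in CB s,
     fits lc #|[set z.1 | z in cluster close (CB s) x]|
             #|[set z.2 | z in cluster close (CB s) x]|].

Definition spin (s : config) (x : site) : R := if s x then 1%R else (-1)%R.

(* H(s) = -J/2 sum_{unordered nn pairs} s(x)s(y) - h/2 sum_x s(x);
   the sum over unordered pairs is half the sum over ordered pairs. *)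
Definition Ham (J h : R) (s : config) : R :=
  (- (J / 2) * (/ 2 * \big[Rplus/0%R]_(p : site * site | nn p.1 p.2)
                           (spin s p.1 * spin s p.2))
   - (h / 2) * \big[Rplus/0%R]_(x : site) spin s x)%R.

Definition weight (J h beta : R) (s : config) : R := exp (- beta * Ham J h s)%R.

Definition Zpart (J h beta : R) : R := \big[Rplus/0%R]_(s : config) weight J h beta s.

Definition mu (J h beta : R) (P : pred config) : R :=
  (\big[Rplus/0%R]_(s : config | P s) weight J h beta s / Zpart J h beta)%R.

Definition inS (J h : R) (s : config) : bool := subcritical (lcrit J h) s.

Definition small_supp (bound : R) (s : config) : bool :=
  if Rle_dec (INR #|supp s|) bound then true else false.

(* W = { s in S : |supp s| <= bound } with bound = |Lambda_beta| / f(beta) *)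
Definition inW (J h : R) (bound : R) (s : config) : bool :=
  inS J h s && small_supp bound s.

End Glauber.

(* Main.v *)
Require Import Defs.
From mathcomp Require Import all_boot.
From Stdlib Require Import Reals.
From HB Require Import structures.
From Stdlib Require Import Lra Lia.
From mathcomp Require Import ssrnat ssrbool eqtype seq fintype finset bigop.
Set Implicit Arguments. Unset Strict Implicit. Unset Printing Implicit Defensive.
Lemma iter_inj T (g : T -> T) n : injective g -> injective (iter n g).
Proof. move=> gi; elim: n => [|n IH] x y //= /gi; exact: IH. Qed.

Lemma step_ext L (r : rel (site L)) (A : {set site L}) : A \subset step r A.
Proof.
apply/subsetP=> x xA; apply/bigcupP; exists x => //.
rewrite /hull inE; apply/andP; split; apply/existsP; exists x;
  by rewrite /cluster inE connect0 eqxx.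
Qed.

Lemma supp_CB L (s : config L) : supp s \subset CB s.
Proof.
rewrite /CB; elim: (L * L) => [|n IH] /=; first exact: step_ext.
exact: subset_trans IH (step_ext _ _).
Qed.

Lemma run_bound L (g : site L -> site L) (pi rho : site L -> 'I_L)
  (A B : {set site L}) l :
 injective g ->
 (forall x, close x (g x)) ->
 (forall x, rho (g x) = rho x) ->
 (forall x y, pi x = pi y -> rho x = rho y -> x = y) ->
 (forall x n, 0 < n < L -> iter n g x != x) ->
 l.+1 < L ->
 A \subset B ->
 (forall x, x \in B -> #|[set pi z | z in cluster (@close L) B x]| <= l.+1) ->
 #|A| <= #|[set e in A | g e \notin A]| * l.+1.
Proof.
move=> ginj gcl grho pirho gcyc lL AB hB.
pose P x j := iter j.+1 g x \notin A.
pose d x := find (P x) (iota 0 l.+1).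
have rhoit x n : rho (iter n g x) = rho x.
  by elim: n => [|n IH] //=; rewrite grho.
have hasP x : x \in A -> has (P x) (iota 0 l.+1).
  move=> xA; apply/negPn/negP=> /hasPn H.
  have itA j : j <= l.+1 -> iter j g x \in A.
    case: j => [|j] // hj.
    have := H j; rewrite mem_iota /= add0n => /(_ hj).
    by rewrite /P negbK.
  have itC j : j <= l.+1 -> connect (restr (@close L) B) x (iter j g x).
    elim: j => [|j IH] hj; first exact: connect0.
    apply: connect_trans (IH (ltnW hj)) _; apply: connect1.
    rewrite /restr /= (subsetP AB _ (itA _ (ltnW hj))) (subsetP AB _ (itA _ hj)).
    exact: gcl.
  have xB : x \in B by apply: (subsetP AB); exact: (itA 0).
  have := hB x xB.
  have sub : [set pi (iter (nat_of_ord j) g x) | j : 'I_l.+2] \subset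
             [set pi z | z in cluster (@close L) B x].
    apply/subsetP=> z /imsetP [j _ ->]; apply/imsetP; exists (iter j g x) => //.
    by rewrite inE; apply: itC; rewrite -ltnS.
  have inj : injective (fun j : 'I_l.+2 => pi (iter j g x)).
    move=> i j /= /pirho /(_ (etrans (rhoit x i) (esym (rhoit x j)))) E.
    apply/val_inj/eqP => /=; apply/negPn/negP => nij.
    have gen (a b : 'I_l.+2) : a < b -> iter a g x = iter b g x -> False.
      move=> ab Eab.
      have := gcyc (iter a g x) (b - a).
      rewrite -iterD subnK ?(ltnW ab) // -Eab eqxx subn_gt0 ab /=.
      move/(_ (leq_ltn_trans (leq_subr _ _) (leq_trans (ltn_ord b) lL))).
      by [].
    case: (ltngtP i j) nij => // ij _; [exact: gen ij E | exact: gen ij (esym E)].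
  have := subset_leq_card sub.
  rewrite card_imset // card_ord => h1 h2.
  by have := leq_trans h1 h2; rewrite ltnn.
pose F := fun x : site L => ((iter (d x) g x : 'I_L * 'I_L), @inord l (d x)).
have dlt x : x \in A -> d x < l.+1.
  by move=> /hasP; rewrite has_find size_iota.
have Pd x : x \in A -> P x (d x).
  move=> xA; have := nth_find 0 (hasP x xA).
  by rewrite -/(d x) nth_iota ?add0n // dlt.
have itdA x : x \in A -> iter (d x) g x \in A.
  move=> xA; case E: (d x) => [|i] //.
  have : i < d x by rewrite E.
  move/(before_find 0); rewrite nth_iota; last by rewrite (ltn_trans _ (dlt x xA)) ?E.
  by rewrite add0n /P => /negbFE.
have Finj : {in A &, injective F}.
  move=> x y xA yA [E1 E2].
  have dd : d x = d y.
    by have := congr1 val E2; rewrite /= !inordK ?dlt.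
  by move: E1; rewrite dd => /(@iter_inj _ g (d y) ginj).
have cF : #|[set F x | x in A]| = #|A| by exact: card_in_imset.
rewrite -cF.
have sub2 : [set F x | x in A] \subset setX [set e in A | g e \notin A] [set: 'I_l.+1].
  apply/subsetP=> z /imsetP [x xA ->].
  rewrite inE /= in_setT andbT inE itdA //=.
  by have := Pd x xA; rewrite /P iterS.
by have := subset_leq_card sub2; rewrite cardsX cardsT card_ord.
Qed.

Definition gR L (x : site L) : site L := (ordS x.1, x.2).
Definition gL L (x : site L) : site L := (ord_pred x.1, x.2).
Definition gU L (x : site L) : site L := (x.1, ordS x.2).
Definition gD L (x : site L) : site L := (x.1, ord_pred x.2).

Lemma modSm m d : (m %% d).+1 %% d = m.+1 %% d.
Proof. by rewrite -(addn1 (m %% d)) -(addn1 m) modnDml. Qed.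

Lemma ordS_val L (a : 'I_L) : val (ordS a) = a.+1 %% L.
Proof. by []. Qed.

Lemma ord_pred_val L (a : 'I_L) : (val (ord_pred a)).+1 %% L = a.
Proof. by rewrite -ordS_val ord_predK. Qed.

Lemma ordS_neq L (a : 'I_L) : 1 < L -> ordS a != a.
Proof.
move=> L1; apply/eqP=> /(congr1 val); rewrite ordS_val /=.
have aL := ltn_ord a; rewrite leq_eqVlt in aL.
case/orP: aL => [/eqP e | lt].
- rewrite e modnn => a0; have a0' : 0 = nat_of_ord a := a0.
  by move: L1; rewrite -e -a0'.
- rewrite modn_small // => h; have h' : (nat_of_ord a).+1 = nat_of_ord a := h; lia.
Qed.

Lemma ord_pred_neq L (a : 'I_L) : 1 < L -> ord_pred a != a.
Proof.
move=> L1; apply/eqP=> E; have := ordS_neq (ord_pred a) L1.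
by rewrite ord_predK E eqxx.
Qed.

Lemma iter_gR L (x : site L) n :
  val (iter n (@gR L) x).1 = (x.1 + n) %% L /\ (iter n (@gR L) x).2 = x.2.
Proof.
elim: n => [|n [IH1 IH2]] /=; first by rewrite addn0 modn_small.
by rewrite /gR /= IH1 IH2 modSm addnS.
Qed.

Lemma iter_gU L (x : site L) n :
  val (iter n (@gU L) x).2 = (x.2 + n) %% L /\ (iter n (@gU L) x).1 = x.1.
Proof.
elim: n => [|n [IH1 IH2]] /=; first by rewrite addn0 modn_small.
by by rewrite /gU /= IH1 IH2 modSm addnS.
Qed.

Lemma modn_cyc L (a : 'I_L) n : 0 < n < L -> (a + n) %% L != a.
Proof.
case/andP=> n0 nL; apply/eqP=> E.
have : (a + n == a + 0 %[mod L]) by rewrite addn0 E modn_small.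
by rewrite eqn_modDl mod0n modn_small // => /eqP h; move: n0; rewrite h.
Qed.

Lemma ordS_pred_neq L (a : 'I_L) : 2 < L -> ordS a != ord_pred a.
Proof.
move=> L2; apply/eqP=> E.
have E2 : ordS (ordS a) = a by rewrite {1}E ord_predK.
have : val (ordS (ordS a)) = val a by rewrite E2.
rewrite !ordS_val modSm -addn2 => H.
by have := modn_cyc a (n:=2) L2; rewrite H eqxx.
Qed.

Lemma cyc_gR L (x : site L) n : 0 < n < L -> iter n (@gR L) x != x.
Proof.
move=> h; apply/eqP=> E; have [h1 _] := iter_gR x n.
by move: (modn_cyc x.1 h); rewrite -h1 E eqxx.
Qed.

Lemma cyc_gU L (x : site L) n : 0 < n < L -> iter n (@gU L) x != x.
Proof.
move=> h; apply/eqP=> E; have [h1 _] := iter_gU x n.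
by move: (modn_cyc x.2 h); rewrite -h1 E eqxx.
Qed.

Lemma iter_cancel T (f g : T -> T) n x : cancel g f -> iter n f (iter n g x) = x.
Proof.
move=> K; elim: n => [|n IH] //; by rewrite iterSr iterS K IH.
Qed.

Lemma cyc_gL L (x : site L) n : 0 < n < L -> iter n (@gL L) x != x.
Proof.
move=> h; apply/eqP=> E; have := cyc_gR x h.
have K : cancel (@gL L) (@gR L) by case=> a b; rewrite /gL /gR /= ord_predK.
by rewrite -{1}E iter_cancel // eqxx.
Qed.

Lemma cyc_gD L (x : site L) n : 0 < n < L -> iter n (@gD L) x != x.
Proof.
move=> h; apply/eqP=> E; have := cyc_gU x h.
have K : cancel (@gD L) (@gU L) by case=> a b; rewrite /gD /gU /= ord_predK.
by rewrite -{1}E iter_cancel // eqxx.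
Qed.

Lemma inj_gR L : injective (@gR L).
Proof. move=> [a b] [c d] E; have E1 : ordS a = ordS c := congr1 fst E.
have E2 : b = d := congr1 snd E. by rewrite (ordS_inj E1) E2. Qed.
Lemma inj_gL L : injective (@gL L).
Proof. move=> [a b] [c d] E; have E1 : ord_pred a = ord_pred c := congr1 fst E.
have E2 : b = d := congr1 snd E. by rewrite (ord_pred_inj E1) E2. Qed.
Lemma inj_gU L : injective (@gU L).
Proof. move=> [a b] [c d] E; have E2 : ordS b = ordS d := congr1 snd E.
have E1 : a = c := congr1 fst E. by rewrite (ordS_inj E2) E1. Qed.
Lemma inj_gD L : injective (@gD L).
Proof. move=> [a b] [c d] E; have E2 : ord_pred b = ord_pred d := congr1 snd E.
have E1 : a = c := congr1 fst E. by rewrite (ord_pred_inj E2) E1. Qed.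

Lemma cycnb_S L (a : 'I_L) : cyc_nb L a (ordS a).
Proof. by rewrite /cyc_nb ordS_val eqxx. Qed.
Lemma cycnb_P L (a : 'I_L) : cyc_nb L a (ord_pred a).
Proof. by rewrite /cyc_nb ord_pred_val eqxx orbT. Qed.

Lemma close_gR L x : close (L:=L) x (gR x).
Proof. by rewrite /close /gR /= cycnb_S eqxx orbT. Qed.
Lemma close_gL L x : close (L:=L) x (gL x).
Proof. by rewrite /close /gL /= cycnb_P eqxx orbT. Qed.
Lemma close_gU L x : close (L:=L) x (gU x).
Proof. by rewrite /close /gU /= cycnb_S eqxx orbT. Qed.
Lemma close_gD L x : close (L:=L) x (gD x).
Proof. by rewrite /close /gD /= cycnb_P eqxx orbT. Qed.

Lemma pair_neq1 L (x y : site L) : x.1 != y.1 -> x != y.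
Proof. by apply: contra => /eqP ->. Qed.
Lemma pair_neq2 L (x y : site L) : x.2 != y.2 -> x != y.
Proof. by apply: contra => /eqP ->. Qed.

Lemma nn_gR L x : 1 < L -> nn (L:=L) x (gR x).
Proof.
move=> L1; rewrite /nn /gR /= cycnb_S eqxx orbT andbT pair_neq1 //= eq_sym ordS_neq //.
Qed.
Lemma nn_gL L x : 1 < L -> nn (L:=L) x (gL x).
Proof.
move=> L1; rewrite /nn /gL /= cycnb_P eqxx orbT andbT pair_neq1 //= eq_sym ord_pred_neq //.
Qed.
Lemma nn_gU L x : 1 < L -> nn (L:=L) x (gU x).
Proof.
move=> L1; rewrite /nn /gU /= cycnb_S eqxx andbT pair_neq2 //= eq_sym ordS_neq //.
Qed.
Lemma nn_gD L x : 1 < L -> nn (L:=L) x (gD x).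
Proof.
move=> L1; rewrite /nn /gD /= cycnb_P eqxx andbT pair_neq2 //= eq_sym ord_pred_neq //.
Qed.

Definition Eg L (A : {set site L}) (g : site L -> site L) := [set e in A | g e \notin A].
Definition Qg L (A : {set site L}) (g : site L -> site L) := [set (e, g e) | e in Eg A g].
Definition Pb L (A : {set site L}) :=
  [set p : site L * site L | [&& nn p.1 p.2, p.1 \in A & p.2 \notin A]].

Lemma disjU (T : finType) (A B : {set T}) :
  (forall p, p \in A -> p \in B -> False) -> #|A :|: B| = #|A| + #|B|.
Proof.
move=> H; have := cardsUI A B.
have -> : A :&: B = set0.
  apply/setP=> p; rewrite inE in_set0; apply/negP=> /andP [] /H h /h; done.
by rewrite cards0 addn0.
Qed.

Lemma card_Qg L A g : #|Qg (L:=L) A g| = #|Eg A g|.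
Proof. by rewrite card_imset // => x y /(congr1 fst). Qed.

Lemma in_Qg L A g p : p \in Qg (L:=L) A g -> p.2 = g p.1.
Proof. by case/imsetP=> e _ ->. Qed.

Lemma Qg_sub L A g : 1 < L -> (forall x, nn x (g x)) -> Qg (L:=L) A g \subset Pb A.
Proof.
move=> _ hn; apply/subsetP=> p /imsetP [e eE ->].
by move: eE; rewrite !inE /= hn => /andP [-> ->].
Qed.

Lemma Qdisj L A g h p : (forall x, g x != h x) -> p \in Qg (L:=L) A g -> p \in Qg A h -> False.
Proof.
move=> gh /in_Qg E1 /in_Qg E2; by have := gh p.1; rewrite -E1 -E2 eqxx.
Qed.

Lemma four_dirs L (A : {set site L}) : 2 < L ->
  #|Eg A (@gR L)| + #|Eg A (@gL L)| + #|Eg A (@gU L)| + #|Eg A (@gD L)| <= #|Pb A|.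
Proof.
move=> L2; have L1 : 1 < L by apply: ltnW.
have nRL x : gR x != gL x := @pair_neq1 L (gR x) (gL x) (ordS_pred_neq x.1 L2).
have nRU x : gR x != gU x := @pair_neq1 L (gR x) (gU x) (ordS_neq x.1 L1).
have nRD x : gR x != gD x := @pair_neq1 L (gR x) (gD x) (ordS_neq x.1 L1).
have nLU x : gL x != gU x := @pair_neq1 L (gL x) (gU x) (ord_pred_neq x.1 L1).
have nLD x : gL x != gD x := @pair_neq1 L (gL x) (gD x) (ord_pred_neq x.1 L1).
have nUD x : gU x != gD x := @pair_neq2 L (gU x) (gD x) (ordS_pred_neq x.2 L2).
rewrite -!card_Qg.
rewrite -disjU; last by move=> p; apply: Qdisj.
rewrite -disjU; last first.
  move=> p; rewrite inE => /orP [] h; [exact: Qdisj h | exact: Qdisj h].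
rewrite -disjU; last first.
  move=> p; rewrite !inE => /orP [/orP [] h|h];
    [exact: Qdisj h | exact: Qdisj h | exact: Qdisj h].
apply: subset_leq_card.
rewrite !subUset !Qg_sub // => x; [exact: nn_gD | exact: nn_gU | exact: nn_gL | exact: nn_gR].
Qed.

Lemma fits_le lc a b : fits lc a b -> (a <= lc) && (b <= lc).
Proof.
rewrite /fits => /orP [] /andP [h1 h2]; apply/andP; split => //;
  apply: leq_trans (leq_pred _); done.
Qed.

Lemma sub_bound L l (s : config L) : l.+2 < L -> subcritical l.+1 s ->
  4 * #|supp s| <= l.+1 * #|Pb (supp s)|.
Proof.
move=> lL /forallP sc.
have lL1 : l.+1 < L by apply: ltnW.
have L2 : 2 < L by apply: leq_ltn_trans lL.
have hB1 x : x \in CB s -> #|[set (fun z : site L => z.1) z | z in cluster (@close L) (CB s) x]| <= l.+1.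
  by move=> xB; have := sc x; rewrite xB /= => /fits_le /andP [].
have hB2 x : x \in CB s -> #|[set (fun z : site L => z.2) z | z in cluster (@close L) (CB s) x]| <= l.+1.
  by move=> xB; have := sc x; rewrite xB /= => /fits_le /andP [].
have pr1 (x y : site L) : x.1 = y.1 -> x.2 = y.2 -> x = y.
  by case: x y => [a b] [c d] /= -> ->.
have pr2 (x y : site L) : x.2 = y.2 -> x.1 = y.1 -> x = y.
  by move=> h1 h2; apply: pr1.
have bR := @run_bound L (@gR L) (fun z : site L => z.1) (fun z : site L => z.2) (supp s) (CB s) l (@inj_gR L) (@close_gR L) (fun x => erefl) pr1 (@cyc_gR L) lL1 (supp_CB s) hB1.
have bL := @run_bound L (@gL L) (fun z : site L => z.1) (fun z : site L => z.2) (supp s) (CB s) l (@inj_gL L) (@close_gL L) (fun x => erefl) pr1 (@cyc_gL L) lL1 (supp_CB s) hB1.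
have bU := @run_bound L (@gU L) (fun z : site L => z.2) (fun z : site L => z.1) (supp s) (CB s) l (@inj_gU L) (@close_gU L) (fun x => erefl) pr2 (@cyc_gU L) lL1 (supp_CB s) hB2.
have bD := @run_bound L (@gD L) (fun z : site L => z.2) (fun z : site L => z.1) (supp s) (CB s) l (@inj_gD L) (@close_gD L) (fun x => erefl) pr2 (@cyc_gD L) lL1 (supp_CB s) hB2.
have := four_dirs (supp s) L2.
rewrite /Eg => h.
rewrite mulnC; apply: leq_trans (leq_mul (leqnn _) h).
rewrite !mulnDr ![l.+1 * _]mulnC.
have -> : #|supp s| * 4 = #|supp s| + #|supp s| + #|supp s| + #|supp s|.
  by rewrite (mulnC _ 4) !mulSn mul0n addn0 !addnA.
by rewrite !leq_add.
Qed.

HB.instance Definition _ := Monoid.isComLaw.Build R 0%R Rplus (fun a b c => esym (Rplus_assoc a b c)) Rplus_comm Rplus_0_l.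
HB.instance Definition _ := Monoid.isComLaw.Build R 1%R Rmult (fun a b c => esym (Rmult_assoc a b c)) Rmult_comm Rmult_1_l.
HB.instance Definition _ := Monoid.isMulLaw.Build R 0%R Rmult Rmult_0_l Rmult_0_r.
HB.instance Definition _ := Monoid.isAddLaw.Build R Rmult Rplus Rmult_plus_distr_r Rmult_plus_distr_l.

Open Scope R_scope.

Lemma iter_Rplus1 n : iter n (Rplus 1) 0 = INR n.
Proof. elim: n => [|n IH]; first by []. rewrite iterS IH S_INR; lra. Qed.

Lemma sumR1 (T : finType) (P : pred T) :
  \big[Rplus/0]_(i | P i) 1 = INR #|[set i | P i]|.
Proof.
rewrite (eq_bigl (fun i => i \in [set i | P i])); last by move=> i; rewrite inE.
by rewrite big_const iter_Rplus1.
Qed.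

Lemma nn_sym L (x y : site L) : nn x y = nn y x.
Proof.
rewrite /nn eq_sym /cyc_nb; congr (_ && _).
case: x y => [a b] [c d] /=.
rewrite (eq_sym (nat_of_ord a)) (eq_sym (nat_of_ord b)).
congr (_ || _); first by rewrite orbC.
by rewrite orbC; congr (_ && _); apply: eq_sym.
Qed.

Definition DS L (s : config L) :=
  [set p : site L * site L | nn p.1 p.2 && (s p.1 != s p.2)].

Lemma card_DS L (s : config L) : #|DS s| = (2 * #|Pb (supp s)|)%N.
Proof.
pose sw (p : site L * site L) := (p.2, p.1).
have swi : injective sw by move=> [a b] [c d] [-> ->].
have E : DS s = Pb (supp s) :|: [set sw p | p in Pb (supp s)].
  apply/setP=> [[x y]]; rewrite !inE /=.
  apply/idP/idP.
  - case/andP=> hn; case Ex: (s x); case Ey: (s y) => //= _.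
    + by rewrite hn.
    + apply/orP; right; apply/imsetP; exists (y, x) => //.
      by rewrite !inE /= nn_sym hn Ex Ey.
  - case/orP.
    + by case/and3P=> -> -> /negbTE ->.
    + case/imsetP=> [[a b]]; rewrite !inE /= => /and3P [h1 h2 h3] [-> ->].
      by rewrite nn_sym h1 h2 (negbTE h3).
rewrite E disjU.
  by rewrite card_imset // mul2n -addnn.
move=> [x y]; rewrite !inE /= => /and3P [_ h1 h2] /imsetP [[a b]].
by rewrite !inE /= => /and3P [_ h3 h4] [E1 E2]; move: h1 h4; rewrite E1 => ->.
Qed.

Lemma sum_spinspin L (s : config L) :
  \big[Rplus/0]_(p : site L * site L | nn p.1 p.2) (spin s p.1 * spin s p.2)
  = INR #|[set p : site L * site L | nn p.1 p.2]| - 2 * INR #|DS s|.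
Proof.
rewrite (bigID (fun p : site L * site L => s p.1 != s p.2)) /=.
have h1 : \big[Rplus/0]_(p : site L * site L | nn p.1 p.2 && (s p.1 != s p.2))
             (spin s p.1 * spin s p.2) = - INR #|DS s|.
  rewrite -sumR1 (big_morph Ropp Ropp_plus_distr Ropp_0).
  apply: eq_bigr => p /andP [_]; rewrite /spin.
  by case: (s p.1); case: (s p.2) => //= _; lra.
have h2 : \big[Rplus/0]_(p : site L * site L | nn p.1 p.2 && ~~ (s p.1 != s p.2))
             (spin s p.1 * spin s p.2) =
          \big[Rplus/0]_(p : site L * site L | nn p.1 p.2 && ~~ (s p.1 != s p.2)) 1.
  apply: eq_bigr => p /andP [_]; rewrite negbK /spin => /eqP ->.
  by case: (s p.2); ring.
have h3 := sumR1 (fun p : site L * site L => nn p.1 p.2).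
rewrite (bigID (fun p : site L * site L => s p.1 != s p.2)) /= sumR1 in h3.
rewrite h1 h2 /DS.
have e : forall a b c : R, a + b = c -> - a + b = c - 2 * a by move=> a b c; lra.
by apply: e; exact: h3.
Qed.

Lemma sum_spin L (s : config L) :
  \big[Rplus/0]_(x : site L) spin s x = INR #|supp s| - INR #|~: supp s|.
Proof.
rewrite (bigID (fun x => s x)) /=.
have e : forall a b c d : R, a = c -> b = - d -> a + b = c - d by move=> a b c d -> ->; ring.
apply: e.
  by rewrite -sumR1; apply: eq_bigr => x; rewrite /spin => ->.
have -> : ~: supp s = [set x | ~~ s x] by apply/setP=> x; rewrite !inE.
rewrite -sumR1 (big_morph Ropp Ropp_plus_distr Ropp_0).
by apply: eq_bigr => x /negbTE; rewrite /spin => ->.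
Qed.

Definition mins L : config L := [ffun _ => false].

Lemma supp_mins L : supp (mins L) = set0.
Proof. by apply/setP=> x; rewrite !inE ffunE. Qed.

Lemma DS_mins L : DS (mins L) = set0.
Proof. by apply/setP=> x; rewrite !inE !ffunE andbF. Qed.

Lemma Ham_diff L J h (s : config L) :
  Ham J h s = Ham J h (mins L) + J * INR #|Pb (supp s)| - h * INR #|supp s|.
Proof.
rewrite /Ham !sum_spinspin !sum_spin card_DS DS_mins supp_mins cards0 setC0.
have hc := cardsC (supp s).
set N := #|[set: site L]|.
have e : INR #|~: supp s| = INR N - INR #|supp s|.
  by rewrite /N cardsT -hc plus_INR; ring.
rewrite e mult_INR cards0 /=.
field.
Qed.

Lemma exp_le x y : x <= y -> exp x <= exp y.
Proof. case/Rle_lt_or_eq_dec => [h|->]; [left; exact: exp_increasing | right; reflexivity]. Qed.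

Lemma ln_le' x y : 0 < x -> x <= y -> ln x <= ln y.
Proof. move=> hx; case/Rle_lt_or_eq_dec => [h|->]; [left; exact: ln_increasing | right; reflexivity]. Qed.

Lemma exp_pow' z n : exp (z * INR n) = exp z ^ n.
Proof.
elim: n => [|n IH]; first by rewrite /= Rmult_0_r exp_0.
by rewrite S_INR Rmult_plus_distr_l Rmult_1_r exp_plus IH /= Rmult_comm.
Qed.

Lemma iter_Rmult y n : iter n (Rmult y) 1 = y ^ n.
Proof. by elim: n => [|n IH] //=; rewrite IH. Qed.

Lemma prod_const (T : finType) y : \big[Rmult/1]_(i : T) y = y ^ #|T|.
Proof.
rewrite (eq_bigl (fun i => i \in [set: T])); last by move=> i; rewrite inE.
by rewrite big_const iter_Rmult cardsT.
Qed.

Lemma sum_exp_supp L z :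
  \big[Rplus/0]_(s : config L) exp (z * INR #|supp s|) <= exp (exp z * INR #|[set: site L]|).
Proof.
set y := exp z.
have e1 : forall s : config L, exp (z * INR #|supp s|) =
    \big[Rmult/1]_(i : site L) (if s i then y else 1).
  move=> s; rewrite exp_pow' -/y -big_mkcond /=.
  rewrite (eq_bigl (fun i => i \in supp s)); last by move=> i; rewrite inE.
  by rewrite big_const iter_Rmult.
rewrite (eq_bigr _ (fun s _ => e1 s)).
have := bigA_distr_bigA (fun (i : site L) (b : bool) => if b then y else 1).
move=> <-.
rewrite (eq_bigr (fun _ => y + 1)); last by move=> i _; rewrite big_bool.
rewrite prod_const -cardsT exp_pow'.
apply: pow_incr; split.
  by have := exp_pos z; rewrite -/y; lra.
by have := exp_ineq1_le y; lra.
Qed.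

Close Scope R_scope.

Lemma cluster_triv L (r : rel (site L)) (A : {set site L}) x :
  (forall u v, u \in A -> v \in A -> r u v -> u = v) -> cluster r A x = [set x].
Proof.
move=> H; apply/setP=> y; rewrite /cluster !inE.
apply/idP/idP; last by move/eqP ->; exact: connect0.
move=> cxy.
have cl : closed (restr r A) (pred1 x).
  by move=> u v /and3P [uA vA ruv]; rewrite /= (H u v uA vA ruv).
have := closed_connect cl cxy; rewrite !inE /= eqxx => h.
by rewrite -(eqP (esym h)).
Qed.

Lemma hull1 L (x : site L) : hull [set x] = [set x].
Proof.
apply/setP=> z; rewrite /hull !inE.
apply/idP/idP; last by move/eqP ->; apply/andP; split; apply/existsP; exists x; rewrite !inE !eqxx.
case/andP=> /existsP [u /andP [/set1P -> h1]] /existsP [v /andP [/set1P -> h2]].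
by case: x z h1 h2 => [a b] [c d] /= /eqP -> /eqP ->.
Qed.

Lemma step_triv L (r : rel (site L)) (A : {set site L}) :
  (forall u v, u \in A -> v \in A -> r u v -> u = v) -> step r A = A.
Proof.
move=> H; rewrite /step.
rewrite (eq_bigr (fun x => [set x])); last by move=> x _; rewrite cluster_triv // hull1.
apply/setP=> z; apply/bigcupP/idP; last by move=> zA; exists z => //; rewrite inE.
by case=> x xA /set1P ->.
Qed.

Lemma nn_close L (x y : site L) : nn x y -> close x y.
Proof.
rewrite /nn /close => /andP [_ /orP [] /andP [/eqP -> h]]; by rewrite eqxx h ?orbT.
Qed.

Lemma CB_triv L (s : config L) :
  (forall u v, u \in supp s -> v \in supp s -> close u v -> u = v) -> CB s = supp s.
Proof.
move=> H; rewrite /CB step_triv; last by move=> u v uA vA /nn_close; apply: H.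
elim: (L * L) => [|k IH] //=; by rewrite IH step_triv.
Qed.

Lemma sub_triv L lc (s : config L) : 1 < lc ->
  (forall u v, u \in supp s -> v \in supp s -> close u v -> u = v) -> subcritical lc s.
Proof.
move=> lc1 H; apply/forallP=> x; apply/implyP=> xC.
rewrite cluster_triv; last by rewrite CB_triv.
rewrite !imset_set1 !cards1 /fits.
by case: lc lc1 => [|[|lc]].
Qed.

Lemma sub_mins L lc : subcritical lc (mins L).
Proof.
apply/forallP=> x; apply/implyP.
rewrite CB_triv ?supp_mins ?inE //.
by move=> u v; rewrite ?supp_mins inE.
Qed.

Definition Ev n : {set 'I_(side n)} := [set (inord (2 * i) : 'I_(side n)) | i : 'I_n].
Definition wit n : config (side n) := [ffun x => (x.1 \in Ev n) && (x.2 \in Ev n)].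

Lemma Ev_val n (a : 'I_(side n)) : a \in Ev n -> exists i, (i < n) /\ val a = 2 * i.
Proof.
case/imsetP=> i _ ->; exists i; split => //.
by rewrite /= inordK // /side ltnS leq_mul2l (ltnW (ltn_ord i)) orbT.
Qed.

Lemma Ev_cyc n (a c : 'I_(side n)) : a \in Ev n -> c \in Ev n -> cyc_nb (side n) a c -> False.
Proof.
move=> /Ev_val [i [hi ->]] /Ev_val [j [hj ->]].
rewrite /cyc_nb /side !modn_small; first last.
- by rewrite ltnS ltn_mul2l /=.
- by rewrite ltnS ltn_mul2l /=.
case/orP=> /eqP h.
- by have := congr1 odd h; rewrite /= !oddM /=.
- by have := congr1 odd h; rewrite /= !oddM /=.
Qed.

Lemma wit_sep n (u v : site (side n)) :
  u \in supp (wit n) -> v \in supp (wit n) -> close u v -> u = v.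
Proof.
rewrite !inE !ffunE => /andP [u1 u2] /andP [v1 v2] /andP [h1 h2].
case/orP: h1 => [/eqP e1|c1]; last by case: (Ev_cyc u1 v1 c1).
case/orP: h2 => [/eqP e2|c2]; last by case: (Ev_cyc u2 v2 c2).
by case: u v e1 e2 {u1 u2 v1 v2} => [a b] [c d] /= e1 e2; congr (_, _); apply: val_inj.
Qed.

Lemma card_wit n : #|supp (wit n)| = (n * n)%N.
Proof.
have -> : supp (wit n) = setX (Ev n) (Ev n).
  by apply/setP=> x; rewrite !inE ffunE.
rewrite cardsX card_imset ?card_ord //.
move=> i j /(congr1 val); rewrite /= !inordK; last first.
- by rewrite /side ltnS leq_mul2l /=; exact: ltnW (ltn_ord _).
- by rewrite /side ltnS leq_mul2l /=; exact: ltnW (ltn_ord _).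
by move/eqP; rewrite eqn_mul2l /= => /eqP h; apply: val_inj.
Qed.

Open Scope R_scope.

Lemma sumR_le (T : finType) (P : pred T) (F G : T -> R) :
  (forall i, P i -> F i <= G i) ->
  \big[Rplus/0]_(i | P i) F i <= \big[Rplus/0]_(i | P i) G i.
Proof.
move=> H; apply: (big_ind2 (fun x y => x <= y)) => //; first lra.
by move=> ? ? ? ? ? ?; lra.
Qed.

Lemma sumR_ge0 (T : finType) (P : pred T) (F : T -> R) :
  (forall i, P i -> 0 <= F i) -> 0 <= \big[Rplus/0]_(i | P i) F i.
Proof.
move=> H; apply: (big_ind (fun x => 0 <= x)) => //; first lra.
by move=> ? ? ? ?; lra.
Qed.

Lemma sumR_sub (T : finType) (P : pred T) (F : T -> R) :
  (forall i, 0 <= F i) -> \big[Rplus/0]_(i | P i) F i <= \big[Rplus/0]_(i : T) F i.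
Proof.
move=> H; rewrite [X in _ <= X](bigID P) /=.
have := @sumR_ge0 T (fun i => ~~ P i) F (fun i _ => H i); lra.
Qed.

Lemma sumR_single (T : finType) (P : pred T) (F : T -> R) j :
  (forall i, 0 <= F i) -> P j -> F j <= \big[Rplus/0]_(i | P i) F i.
Proof.
move=> H Pj; rewrite (bigD1 j Pj) /=.
have := @sumR_ge0 T (fun i => P i && (i != j)) F (fun i _ => H i); lra.
Qed.

Lemma weight_pos J h b L (s : config L) : 0 < weight J h b s.
Proof. exact: exp_pos. Qed.

Lemma weight_bound L l J h b (s : config L) : 0 < J -> 0 < b -> (l.+2 < L)%N ->
  subcritical l.+1 s ->
  weight J h b s <= weight J h b (mins L) *
                    exp (- b * (4 * J / INR l.+1 - h) * INR #|supp s|).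
Proof.
move=> J0 b0 lL sc.
have hb := sub_bound lL sc.
have hR : 4 * INR #|supp s| <= INR l.+1 * INR #|Pb (supp s)|.
  have := le_INR _ _ (leP hb); rewrite !mult_INR /=; lra.
have l0 : 0 < INR l.+1 by apply: lt_0_INR; apply/ltP.
rewrite /weight -exp_plus; apply: exp_le.
rewrite (Ham_diff J h s).
have : 4 * J / INR l.+1 * INR #|supp s| <= J * INR #|Pb (supp s)|.
  apply: (Rmult_le_reg_l (INR l.+1)) => //.
  field_simplify; last lra.
  have := Rmult_le_compat_l J _ _ (Rlt_le _ _ J0) hR; lra.
move=> H.
have : 0 <= b * (J * INR #|Pb (supp s)| - 4 * J / INR l.+1 * INR #|supp s|).
  apply: Rmult_le_pos; lra.
nra.
Qed.

Lemma card_site n : INR #|[set: site (side n)]| = INR (side n * side n).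
Proof. by rewrite cardsT card_prod card_ord. Qed.

Lemma key n J h b F l :
  0 < J -> 0 < b -> 0 < F -> lcrit J h = l.+1 -> (0 < l)%N -> (l.+2 < side n)%N ->
  0 <= b * (4 * J / INR l.+1 - h) - ln F ->
  INR (side n * side n) / F < INR #|supp (wit n)| ->
  ln (mu (L := side n) J h b
        (fun s => inS J h s && ~~ inW J h (INR (side n * side n) / F) s)
      / mu (L := side n) J h b (fun s => inS J h s))
  <= INR (side n * side n) / F * (1 - (b * (4 * J / INR l.+1 - h) - ln F)).
Proof.
move=> J0 b0 F0 Hlc l0 lL a0 Bw.
set N := side n.
set B := INR (N * N) / F.
set c0 := 4 * J / INR l.+1 - h.
set a := b * c0 - ln F.
set w := @weight N J h b.
set Pw := fun s : config N => inS J h s && ~~ inW J h B s.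
set Ps := fun s : config N => inS J h s.
have wpos s : 0 < w s by apply: weight_pos.
have wnn s : 0 <= w s by apply: Rlt_le.
have Zpos : 0 < @Zpart N J h b.
  apply: Rlt_le_trans (wpos (mins N)) _.
  exact: (@sumR_single _ (fun _ => true) w (mins N) wnn).
have Sm : w (mins N) <= \big[Rplus/0]_(s | Ps s) w s.
  apply: sumR_single => //; rewrite /Ps /inS; exact: sub_mins.
have Pwit : Pw (wit n).
  rewrite /Pw /inW /inS Hlc.
  have -> : subcritical l.+1 (wit n).
    by apply: sub_triv => //; apply: wit_sep.
  rewrite /= /small_supp; case: Rle_dec => // h1; exfalso; move: h1; rewrite /B /N; lra.
have SW : 0 < \big[Rplus/0]_(s | Pw s) w s.
  apply: Rlt_le_trans (wpos (wit n)) _; exact: sumR_single.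
have up : \big[Rplus/0]_(s | Pw s) w s <=
          w (mins N) * exp (- a * B) * exp (/ F * INR (N * N)).
  apply: Rle_trans (_ : \big[Rplus/0]_(s | Pw s)
      (w (mins N) * exp (- a * B) * exp ((a - b * c0) * INR #|supp s|)) <= _).
    apply: sumR_le => s /andP [sS nW].
    have sc : subcritical l.+1 s by move: sS; rewrite /inS Hlc.
    apply: Rle_trans (@weight_bound N l J h b s J0 b0 lL sc) _.
    rewrite [X in _ <= X]Rmult_assoc -[X in _ <= _ * X]exp_plus.
    apply: Rmult_le_compat_l; first exact: wnn.
    apply: exp_le.
    have kB : B < INR #|supp s|.
      move: nW; rewrite /inW sS /= /small_supp; case: Rle_dec => // h1 _; exact: Rnot_le_lt h1.
    have : 0 <= a * (INR #|supp s| - B) by apply: Rmult_le_pos; [exact: a0 | lra].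
    rewrite -/c0 => H; nra.
  rewrite -big_distrr /=.
  apply: Rmult_le_compat_l.
    apply: Rmult_le_pos; [exact: wnn | exact: Rlt_le (exp_pos _)].
  apply: Rle_trans (sumR_sub _ (fun s => Rlt_le _ _ (exp_pos _))) _.
  apply: Rle_trans (sum_exp_supp _ _) _.
  rewrite card_site.
  have -> : exp (a - b * c0) = / F.
    rewrite /a; have -> : b * c0 - ln F - b * c0 = - ln F by ring.
    by rewrite exp_Ropp exp_ln.
  by right.
have ratio : mu J h b Pw / mu J h b Ps <= exp (B * (1 - a)).
  rewrite /mu.
  have Spos : 0 < \big[Rplus/0]_(s | Ps s) w s by apply: Rlt_le_trans Sm; apply: wpos.
  have -> : \big[Rplus/0]_(s | Pw s) weight J h b s / @Zpart N J h b /
            (\big[Rplus/0]_(s | Ps s) weight J h b s / @Zpart N J h b) =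
            \big[Rplus/0]_(s | Pw s) w s / \big[Rplus/0]_(s | Ps s) w s.
    rewrite /w; field; split; apply: Rgt_not_eq; assumption.
  apply: Rle_trans (_ : w (mins N) * exp (- a * B) * exp (/ F * INR (N * N)) / w (mins N) <= _).
    rewrite /Rdiv; apply: Rle_trans (Rmult_le_compat_r _ _ _ _ up) _.
      by apply: Rlt_le; apply: Rinv_0_lt_compat.
    apply: Rmult_le_compat_l.
      apply: Rmult_le_pos; [apply: Rmult_le_pos; [exact: wnn | exact: Rlt_le (exp_pos _)] |
        exact: Rlt_le (exp_pos _)].
    apply: Rinv_le_contravar => //; exact: wpos.
  have -> : w (mins N) * exp (- a * B) * exp (/ F * INR (N * N)) / w (mins N) =
            exp (- a * B) * exp (/ F * INR (N * N)).
    field; apply: Rgt_not_eq; exact: wpos.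
  rewrite -exp_plus; apply: exp_le; rewrite /B /Rdiv; nra.
have rpos : 0 < mu J h b Pw / mu J h b Ps.
  rewrite /mu; apply: Rdiv_lt_0_compat; apply: Rdiv_lt_0_compat => //.
  by apply: Rlt_le_trans Sm; apply: wpos.
apply: Rle_trans (ln_le' rpos ratio) _.
by rewrite ln_exp; right.
Qed.

Lemma lcrit_prop J h : 0 < J -> 0 < h -> h < 2 * J ->
  (2 <= lcrit J h)%N /\ INR (lcrit J h) <= 2 * J / h + 1.
Proof.
move=> J0 h0 hJ.
have x1 : 1 < 2 * J / h.
  apply: (Rmult_lt_reg_r h) => //; rewrite Rmult_1_l /Rdiv Rmult_assoc Rinv_l; lra.
have [a1 a2] := archimed (2 * J / h).
have up0 : (0 <= up (2 * J / h))%Z.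
  apply: le_IZR; lra.
have e : INR (lcrit J h) = IZR (up (2 * J / h)).
  by rewrite /lcrit INR_IZR_INZ Znat.Z2Nat.id.
split; last by rewrite e; lra.
apply/leP; apply: INR_lt; rewrite e /=; lra.
Qed.

Lemma c0_pos J h l : 0 < J -> 0 < h -> h < 2 * J -> lcrit J h = l.+1 ->
  0 < 4 * J / INR l.+1 - h.
Proof.
move=> J0 h0 hJ E; have [_ hl] := lcrit_prop J0 h0 hJ; rewrite E in hl.
have lp : 0 < INR l.+1 by apply: lt_0_INR; apply/ltP.
have : h * INR l.+1 <= h * (2 * J / h + 1) by apply: Rmult_le_compat_l; lra.
have -> : h * (2 * J / h + 1) = 2 * J + h by field; lra.
move=> H.
have : h * INR l.+1 < 4 * J by lra.
move=> H2.
apply: Rlt_Rminus; apply: (Rmult_lt_reg_r (INR l.+1)) => //.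
rewrite /Rdiv Rmult_assoc Rinv_l; lra.
Qed.

Lemma INR_side n : INR (side n) = 2 * INR n + 1.
Proof. by rewrite /side S_INR mult_INR. Qed.

Lemma main_aux (J h : R) (m : R -> nat) (f : R -> R) :
  (0 < J) -> (0 < h) -> (h < 2 * J) ->
  (forall M : R, exists b0 : R, forall b : R, (b > b0) ->
      (INR (side (m b) * side (m b))%N > M)) ->
  (forall b : R, (0 < b) -> (0 < f b)) ->
  (forall M : R, exists b0 : R, forall b : R, (b > b0) -> (f b > M)) ->
  (forall eps : R, (eps > 0) -> exists b0 : R, forall b : R, (b > b0) ->
      (Rabs (/ b * ln (f b)) < eps)) ->
  (forall M : R, exists b0 : R, forall b : R, (b > b0) ->
      (INR (side (m b) * side (m b))%N / f b > M)) ->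
  forall M : R, exists b0 : R, forall b : R, (b > b0) ->
    (/ b * ln (mu (L := side (m b)) J h b
                  (fun s => inS J h s &&
                     ~~ inW J h (INR (side (m b) * side (m b))%N / f b) s)
               / mu (L := side (m b)) J h b (fun s => inS J h s)) < - M).
Proof.
move=> J0 h0 hJ HN fpos finf flog HNf M.
have [lc2 _] := lcrit_prop J0 h0 hJ.
set lc := lcrit J h in lc2.
have [l El] : exists l, lcrit J h = l.+1.
  by exists (lcrit J h).-1; rewrite prednK // (leq_trans _ lc2).
have l0 : (0 < l)%N by move: lc2; rewrite /lc El.
set c0 := 4 * J / INR l.+1 - h.
have c0p : 0 < c0 by apply: c0_pos.
have [b1 Hb1] := HN (INR ((l.+3) * (l.+3))%N).
have [b2 Hb2] := finf 9.
have [b3 Hb3] := flog (c0 / 4) ltac:(lra).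
have [b4 Hb4] := HNf (2 * Rabs M / c0).
set R1 := Rmax b1 b2; set R2 := Rmax b3 b4; set R3 := Rmax R1 R2;
  set R4 := Rmax (4 / c0) 0.
exists (Rmax R3 R4) => b hb.
have h3 : R3 < b := Rle_lt_trans _ _ _ (Rmax_l _ _) hb.
have h4 : R4 < b := Rle_lt_trans _ _ _ (Rmax_r _ _) hb.
have h1 : R1 < b := Rle_lt_trans _ _ _ (Rmax_l _ _) h3.
have h2 : R2 < b := Rle_lt_trans _ _ _ (Rmax_r _ _) h3.
have hb1 : b > b1 := Rle_lt_trans _ _ _ (Rmax_l _ _) h1.
have hb2 : b > b2 := Rle_lt_trans _ _ _ (Rmax_r _ _) h1.
have hb3 : b > b3 := Rle_lt_trans _ _ _ (Rmax_l _ _) h2.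
have hb4 : b > b4 := Rle_lt_trans _ _ _ (Rmax_r _ _) h2.
have hbc : 4 / c0 < b := Rle_lt_trans _ _ _ (Rmax_l _ _) h4.
have bpos : 0 < b := Rle_lt_trans _ _ _ (Rmax_r _ _) h4.
have F9 := Hb2 b hb2.
have hlog := Hb3 b hb3.
have hNf := Hb4 b hb4.
have hN := Hb1 b hb1.
set n := m b in hN hNf *.
set F := f b in F9 hlog hNf *.
have Fpos : 0 < F by lra.
have lL : (l.+2 < side n)%N.
  case: (ltnP l.+2 (side n)) => // hle; exfalso.
  have hle' : (side n <= l.+3)%N by apply: leq_trans hle (leqnSn _).
  have := le_INR _ _ (leP (leq_mul hle' hle')); lra.
have n1 : 1 < INR n.
  have := lt_INR _ _ (ltP lL); rewrite INR_side.
  have := le_INR _ _ (leP l0); rewrite !S_INR /=; lra.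
have Bw : INR (side n * side n) / F < INR #|supp (wit n)|.
  rewrite card_wit !mult_INR INR_side.
  apply: (Rmult_lt_reg_r F) => //; rewrite /Rdiv Rmult_assoc Rinv_l; last lra.
  nra.
have hv := Rle_lt_trans _ _ _ (Rle_abs _) hlog.
have a0 : 0 <= b * (4 * J / INR l.+1 - h) - ln F.
  rewrite -/c0.
  have : ln F = b * (/ b * ln F) by field; lra.
  move=> ->; nra.
have hk := key J0 bpos Fpos El l0 lL a0 Bw.
rewrite -/c0 in hk.
have ib : 0 < / b by apply: Rinv_0_lt_compat.
apply: Rle_lt_trans (Rmult_le_compat_l _ _ _ (Rlt_le _ _ ib) hk) _.
set B := INR (side n * side n) / F in hNf *.
have hu : / b < c0 / 4.
  have e : c0 / 4 = / (4 / c0) by field; lra.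
  rewrite e; apply: Rinv_lt_contravar => //.
  apply: Rmult_lt_0_compat => //; apply: Rdiv_lt_0_compat; lra.
set v := / b * ln F in hv.
have Bc : B * c0 > 2 * Rabs M.
  have := Rmult_lt_compat_r c0 _ _ c0p hNf.
  have -> : 2 * Rabs M / c0 * c0 = 2 * Rabs M by field; lra.
  lra.
have Mabs := Rle_abs M.
have Bp : 0 < B.
  have := Rabs_pos M; have : 0 <= 2 * Rabs M / c0.
    apply: Rmult_le_pos; [have := Rabs_pos M; lra | apply: Rlt_le; exact: Rinv_0_lt_compat].
  lra.
have e : / b * (B * (1 - (b * c0 - ln F))) = B * (/ b - c0 + v).
  rewrite /v; field; lra.
rewrite e.
have : 0 < B * (c0 / 2 - / b - v) by apply: Rmult_lt_0_compat; lra.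
nra.
Qed.

Close Scope R_scope.

Theorem lemmaA1 (J h : R) (m : R -> nat) (f : R -> R) :
  (0 < J)%R -> (0 < h)%R -> (h < 2 * J)%R ->
  (forall k : nat, (2 * J / h)%R <> INR k) ->
  (* |Lambda_beta| -> infinity *)
  (forall M : R, exists b0 : R, forall b : R, (b > b0)%R ->
      (INR (side (m b) * side (m b)) > M)%R) ->
  (* f : (0,oo) -> (0,oo) *)
  (forall b : R, (0 < b)%R -> (0 < f b)%R) ->
  (* f -> infinity *)
  (forall M : R, exists b0 : R, forall b : R, (b > b0)%R -> (f b > M)%R) ->
  (* (1/beta) log f -> 0 *)
  (forall eps : R, (eps > 0)%R -> exists b0 : R, forall b : R, (b > b0)%R ->
      (Rabs (/ b * ln (f b)) < eps)%R) ->
  (* |Lambda_beta| / f -> infinity *)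
  (forall M : R, exists b0 : R, forall b : R, (b > b0)%R ->
      (INR (side (m b) * side (m b)) / f b > M)%R) ->
  (* conclusion: (1/beta) log (mu(S \ W) / mu(S)) -> -infinity *)
  forall M : R, exists b0 : R, forall b : R, (b > b0)%R ->
    (/ b * ln (mu (L := side (m b)) J h b
                  (fun s => inS J h s &&
                     ~~ inW J h (INR (side (m b) * side (m b)) / f b)%R s)
               / mu (L := side (m b)) J h b (fun s => inS J h s)) < - M)%R.
Proof.
move=> J0 h0 hJ _; exact: main_aux.
Qed.
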